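(* Let $n\ge 1$ be an integer. Knowlton-Graham partitions of $\{1,\ldots,n\}$ exist if and only if there exist a positive integer $m$ and an $m\times m$ matrix with entries in $\{0,1\}$ whose row sums $(r_1,\ldots,r_m)$ and column sums $(c_1,\ldots,c_m)$ satisfy: $j$ divides $r_j$ and $j$ divides $c_j$ for every $1\le j\le m$, and $r_1+\cdots+r_m=c_1+\cdots+c_m=n$.
   Context: A pair of Knowlton-Graham partitions of $\{1,\ldots,n\}$ consists of two partitions $A_1,\ldots,A_p$ and $B_1,\ldots,B_q$ of $\{1,\ldots,n\}$ into nonempty pairwise disjoint sets such that, for every pair of positive integers $(j,k)$, at most one element of $\{1,\ldots,n\}$ lies both in some $A_i$ with $|A_i|=j$ and in some $B_l$ with $|B_l|=k$. *)

(* Defs.v *)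
From mathcomp Require Import all_boot all_algebra.
Set Implicit Arguments. Unset Strict Implicit. Unset Printing Implicit Defensive.

(* The ground set {1,...,n} is modelled by 'I_n (element i stands for i+1). *)

Definition in_block_of_size (n : nat) (P : {set {set 'I_n}}) (j : nat) (x : 'I_n) : bool :=
  [exists A in P, (x \in A) && (#|A| == j)].

Definition KG_pair (n : nat) (P Q : {set {set 'I_n}}) : Prop :=
  partition P [set: 'I_n] /\ partition Q [set: 'I_n] /\
  forall j k : nat,
    #|[set x : 'I_n | in_block_of_size P j x && in_block_of_size Q k x]| <= 1.

Definition KG_exists (n : nat) : Prop := exists P Q : {set {set 'I_n}}, KG_pair P Q.

Definition row_sum (m : nat) (M : 'M[nat]_m) (i : 'I_m) : nat := \sum_(k < m) M i k.
Definition col_sum (m : nat) (M : 'M[nat]_m) (i : 'I_m) : nat := \sum_(k < m) M k i.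

(* Main.v *)
Require Import Defs.
From mathcomp Require Import all_boot all_algebra.
From mathcomp Require Import zify.
Set Implicit Arguments. Unset Strict Implicit. Unset Printing Implicit Defensive.

Lemma count_div_iota d k q : 0 < d -> q < k ->
  count (fun t => t %/ d == q) (iota 0 (k * d)) = d.
Proof.
move=> d0 qk.
have -> : k * d = q * d + (d + (k - q.+1) * d) by nia.
rewrite !iotaD !count_cat add0n.
rewrite (@eq_in_count _ _ pred0); last first.
  move=> t; rewrite mem_iota => /andP[_ ht] /=.
  case: eqP => // e; nia.
rewrite count_pred0 add0n.
rewrite (@eq_in_count _ _ predT (iota (q*d) d)); last first.
  move=> t; rewrite mem_iota => /andP[h1 h2] /=.
  apply/eqP; nia.
rewrite count_predT size_iota.
rewrite (@eq_in_count _ _ pred0); last first.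
  move=> t; rewrite mem_iota => /andP[ht _] /=.
  case: eqP => // e; nia.
by rewrite count_pred0 addn0.
Qed.

Lemma card_set_count (T : finType) (A : {set T}) (p : pred T) :
  #|[set y in A | p y]| = count p (enum A).
Proof.
rewrite -size_filter -(card_uniqP _); last by rewrite filter_uniq ?enum_uniq.
by apply: eq_card => y; rewrite inE mem_filter mem_enum andbC.
Qed.

Lemma count_index (T : eqType) (s : seq T) (p : pred nat) : uniq s ->
  count (fun y => p (index y s)) s = count p (iota 0 (size s)).
Proof.
move=> us; case: s us => [|x0 s'] // us.
set s := x0 :: s'.
rewrite -[X in count _ X](mkseq_nth x0 s) /mkseq count_map.
apply: eq_in_count => i; rewrite mem_iota => /andP[_ hi].
change (p (index (nth x0 s i) s) = p i); by rewrite index_uniq.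
Qed.

Lemma partition_lab (T : finType) m (lab : T -> 'I_m)
  (hd : forall j : 'I_m, j.+1 %| #|[set x | lab x == j]|) :
  exists P : {set {set T}}, partition P [set: T] /\
    forall A x, A \in P -> x \in A -> #|A| = (lab x).+1.
Proof.
pose s j := enum [set y | lab y == j].
pose key x := (lab x, index x (s (lab x)) %/ (lab x).+1).
exists (preim_partition key [set: T]); split; first exact: preim_partitionP.
move=> A x AP xA.
have := preim_partitionP key [set: T]; case/and3P => _ triv _.
rewrite -(def_pblock triv AP xA).
have -> : pblock (preim_partition key setT) x = [set y | key y == key x].
  apply/setP=> y; rewrite inE (pblock_equivalence_partition) ?inE // 1?eq_sym //.
  by move=> a b c _ _ _; split; [rewrite eqxx | move/eqP->].
set j := lab x; set d := j.+1; set q := index x (s j) %/ d.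
have -> : [set y | key y == key x] =
    [set y in [set y | lab y == j] | index y (s j) %/ d == q].
  apply/setP=> y; rewrite !inE /key xpair_eqE -/j.
  by case: (eqVneq (lab y) j) => [->|].
rewrite card_set_count.
have -> := (count_index (fun t => t %/ d == q) (enum_uniq (mem [set y | lab y == j]))).
have hs : size (s j) = (#|[set y | lab y == j]| %/ d) * d.
  by rewrite divnK ?hd // /s -cardE.
rewrite -/(s j) hs count_div_iota //.
rewrite -(ltn_pmul2r (ltn0Sn j)) -hs.
apply: leq_ltn_trans (leq_trunc_div _ _) _.
by rewrite index_mem /s mem_enum inE.
Qed.

Lemma inb_sz n (P : {set {set 'I_n}}) j x : partition P [set: 'I_n] ->
  in_block_of_size P j x = (#|pblock P x| == j).
Proof.
case/and3P => /eqP cov triv _; apply/existsP/eqP.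
  by case=> A /and3P[AP xA /eqP <-]; rewrite (def_pblock triv AP xA).
move=> e; exists (pblock P x); rewrite pblock_mem ?mem_pblock ?cov ?inE ?e ?eqxx //.
Qed.

Lemma sz_bounds n (P : {set {set 'I_n}}) x : partition P [set: 'I_n] ->
  0 < #|pblock P x| <= n.
Proof.
case/and3P => /eqP cov _ _; apply/andP; split; last first.
  by apply: leq_trans (max_card _) _; rewrite card_ord.
by apply/card_gt0P; exists x; rewrite mem_pblock cov inE.
Qed.

Lemma sum_eq1 n v : 0 < v <= n -> \sum_(k < n) (v == k.+1 : nat) = 1.
Proof.
move=> /andP[v0 vn]; have h : v.-1 < n by lia.
rewrite (bigD1 (Ordinal h)) //= prednK // eqxx big1 // => k ne.
case: eqP => // e; case/eqP: ne; apply: val_inj => /=; lia.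
Qed.

Lemma cardS (T : finType) (p : pred T) : #|[set x | p x]| = \sum_x (p x : nat).
Proof.
by rewrite -sum1_card big_mkcond; apply: eq_bigr => x _; rewrite inE; case: (p x).
Qed.

Lemma sum_split n (a : pred 'I_n) (g : 'I_n -> nat) (hg : forall x, 0 < g x <= n) :
  \sum_(k < n) #|[set x | a x && (g x == k.+1)]| = #|[set x | a x]|.
Proof.
rewrite (cardS a) (eq_bigr (fun k : 'I_n => \sum_x (a x && (g x == k.+1) : nat))); last by move=> k _; apply: cardS.
rewrite exchange_big /=; apply: eq_bigr => x _.
case: (a x) => /=; first exact: sum_eq1.
by rewrite big1.
Qed.

Lemma div_part n (P : {set {set 'I_n}}) j : partition P [set: 'I_n] ->
  j %| #|[set x | #|pblock P x| == j]|.
Proof.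
move=> hP; have := hP; case/and3P => /eqP cov triv _.
pose P' := [set A in P | #|A| == j].
have triv' : trivIset P' by apply: trivIsetS triv; apply/subsetP => A; rewrite inE => /andP[].
have -> : [set x | #|pblock P x| == j] = cover P'.
  apply/setP => x; rewrite inE; apply/eqP/bigcupP.
    move=> e; exists (pblock P x); rewrite ?inE ?e ?eqxx ?andbT ?pblock_mem ?mem_pblock ?cov ?inE //.
  by case=> B; rewrite inE => /andP[BP /eqP <-] xB; rewrite (def_pblock triv BP xB).
rewrite -sum1_card (big_trivIset _ triv') /=.
apply: dvdn_sum => B; rewrite inE => /andP[_ /eqP e].
by rewrite sum1_card e.
Qed.

Theorem lemma1 (n : nat) (hn : 1 <= n) :
  KG_exists n <->
  exists (m : nat) (M : 'M[nat]_m),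
    0 < m /\
    (forall i k : 'I_m, M i k <= 1) /\
    (forall i : 'I_m, i.+1 %| row_sum M i) /\
    (forall i : 'I_m, i.+1 %| col_sum M i) /\
    \sum_(i < m) row_sum M i = n /\
    \sum_(i < m) col_sum M i = n.
Proof.
split.
  move=> [P [Q [hP [hQ hKG]]]].
  pose M : 'M[nat]_n := (\matrix_(i, k)
     #|[set x | in_block_of_size P i.+1 x && in_block_of_size Q k.+1 x]|%N)%R.
  have ME i k : M i k = #|[set x | (#|pblock P x| == i.+1) && (#|pblock Q x| == k.+1)]|.
    by rewrite mxE; apply: eq_card => x; rewrite !inE !inb_sz.
  have hr i : row_sum M i = #|[set x | #|pblock P x| == i.+1]|.
    rewrite /row_sum (eq_bigr _ (fun k _ => ME i k)).
    exact: (sum_split (fun x => #|pblock P x| == i.+1) (fun x => sz_bounds x hQ)).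
  have hc i : col_sum M i = #|[set x | #|pblock Q x| == i.+1]|.
    rewrite /col_sum (eq_bigr (fun k : 'I_n => #|[set x | (#|pblock Q x| == i.+1) && (#|pblock P x| == k.+1)]|)).
      exact: (sum_split (fun x => #|pblock Q x| == i.+1) (fun x => sz_bounds x hP)).
    by move=> k _; rewrite ME; apply: eq_card => x; rewrite !inE andbC.
  have tot (R : {set {set 'I_n}}) : partition R [set: 'I_n] ->
      \sum_(i < n) #|[set x | #|pblock R x| == i.+1]| = n.
    move=> hR.
    rewrite (eq_bigr (fun i : 'I_n => #|[set x | predT x && (#|pblock R x| == i.+1)]|)) //.
    by rewrite (sum_split predT (fun x => sz_bounds x hR)) /= cardsT card_ord.
  exists n, M; split; first by [].
  split; first by move=> i k; rewrite mxE; apply: hKG.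
  split; first by move=> i; rewrite hr; exact: div_part.
  split; first by move=> i; rewrite hc; exact: div_part.
  split.
    by rewrite (eq_bigr _ (fun i _ => hr i)) tot.
  by rewrite (eq_bigr _ (fun i _ => hc i)) tot.
move=> [m [M [m0 [M01 [hr [hc [sr sc]]]]]]].
pose S := [set c : 'I_m * 'I_m | M c.1 c.2 == 1].
have eqM i k : (M i k == 1 : nat) = M i k.
  by have := M01 i k; case: (M i k) => [|[|]].
have rowc j : #|[set c in S | c.1 == j]| = row_sum M j.
  have -> : [set c in S | c.1 == j] = setX [set j] [set k | M j k == 1].
    apply/setP => -[a b]; rewrite !inE /=.
    by case: (eqVneq a j) => [->|]; rewrite ?andbT ?andbF.
  rewrite cardsX cards1 mul1n cardS /row_sum.
  by apply: eq_bigr => k _; rewrite eqM.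
have colc j : #|[set c in S | c.2 == j]| = col_sum M j.
  have -> : [set c in S | c.2 == j] = setX [set k | M k j == 1] [set j].
    apply/setP => -[a b]; rewrite !inE /=.
    by case: (eqVneq b j) => [->|]; rewrite ?andbT ?andbF.
  rewrite cardsX cards1 muln1 cardS /col_sum.
  by apply: eq_bigr => k _; rewrite eqM.
have hS : #|S| = n.
  rewrite -sr /S cardS.
  rewrite (eq_bigr (fun c : 'I_m * 'I_m => M c.1 c.2)); last by move=> c _; rewrite eqM.
  rewrite -(pair_big predT predT (fun i k => M i k)) /=.
  by apply: eq_bigr => i _.
pose f (x : 'I_n) : 'I_m * 'I_m := enum_val (cast_ord (esym hS) x).
have f_inj : injective f.
  by move=> x y /enum_val_inj /cast_ord_inj.
have cnt (p : pred ('I_m * 'I_m)) : #|[set x | p (f x)]| = #|[set c in S | p c]|.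
  rewrite -(card_imset _ f_inj); apply: eq_card => c; apply/imsetP/idP.
    case=> x; rewrite inE => px ->; rewrite inE px andbT; exact: enum_valP.
  rewrite inE => /andP[cS pc].
  exists (cast_ord hS (enum_rank_in cS c)); last by rewrite /f cast_ordK enum_rankK_in.
  by rewrite inE /f cast_ordK enum_rankK_in.
have [P [hP hPs]] : exists P : {set {set 'I_n}}, partition P [set: 'I_n] /\
    forall A x, A \in P -> x \in A -> #|A| = (f x).1.+1.
  apply: partition_lab => j; rewrite (cnt (fun c => c.1 == j)) rowc; exact: hr.
have [Q [hQ hQs]] : exists Q : {set {set 'I_n}}, partition Q [set: 'I_n] /\
    forall A x, A \in Q -> x \in A -> #|A| = (f x).2.+1.
  apply: partition_lab => j; rewrite (cnt (fun c => c.2 == j)) colc; exact: hc.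
have inbP (R : {set {set 'I_n}}) (lab : 'I_n -> 'I_m) j x :
    (forall A x, A \in R -> x \in A -> #|A| = (lab x).+1) ->
    in_block_of_size R j x -> j = (lab x).+1.
  by move=> hR /existsP[A /and3P[AR xA /eqP <-]]; exact: hR.
exists P, Q; split; first exact: hP; split; first exact: hQ.
move=> j k; apply/card_le1_eqP => x y; rewrite !inE => /andP[hx1 hx2] /andP[hy1 hy2].
have e1 := inbP _ _ _ _ hPs hx1; rewrite (inbP _ _ _ _ hPs hy1) in e1.
have e2 := inbP _ _ _ _ hQs hx2; rewrite (inbP _ _ _ _ hQs hy2) in e2.
apply: f_inj; move: e1 e2; case: (f x) => a b; case: (f y) => c d /= [e1] [e2].
by congr pair; apply: val_inj.
Qed.
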